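(* Let $p$ be an odd prime, $a_1,a_2,a_3\in\mathbb{F}_p$, $s=3+a_1+a_2+a_3$, and fix an index $i$ (indices modulo $3$). Let $x\neq(0,0,0)$ be a solution in $\mathbb{F}_p^3$ of \[ x_1^2+x_2^2+x_3^2+a_1x_2x_3+a_2x_1x_3+a_3x_1x_2 = s\,x_1x_2x_3 \] with $x_i=0$. Let $m_k$ ($k=1,2,3$) replace $x_k$ by $-x_k + s x_{k-1}x_{k+1} - a_{k+1}x_{k-1} - a_{k-1}x_{k+1}$ leaving the other coordinates unchanged, let $\rho = m_{i+1}\circ m_{i-1}$, and let $N$ be the order of $\rho$ as a permutation of the nonzero solutions with $i$-th coordinate $0$. For such solutions $y$ (which have $y_{i-1}y_{i+1}\neq 0$) define \[ \Delta_i(y) = \frac12\Big(\frac{a_{i-1}}{y_{i-1}} + \frac{a_{i+1}}{y_{i+1}}\Big). \] If $a_i^2\neq 4$, then \[ \sum_{\ell=0}^{N-1}\Big(\Delta_i(m_{i-1}\rho^\ell x) + \Delta_i(\rho^\ell x)\Big) = 0. \] If $a_i^2 = 4$, then this identity holds if and only if $2a_{i-1} = a_{i+1}a_i$. *)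

(* Defs.v *)
From mathcomp Require Import all_boot all_algebra.
Set Implicit Arguments. Unset Strict Implicit. Unset Printing Implicit Defensive.
Import GRing.Theory.
Local Open Scope ring_scope.

(* Indices are 0-based ('I_3) and taken modulo 3:
   the paper's index k corresponds to k-1 here. *)
Definition nxt (k : 'I_3) : 'I_3 := inord ((k + 1) %% 3).
Definition prv (k : 'I_3) : 'I_3 := inord ((k + 2) %% 3).

Section Markoff.
Variables (p : nat) (a : 'I_3 -> 'F_p).

Definition sval3 : 'F_p := 3%:R + a ord0 + a (inord 1) + a (inord 2).

Definition is_sol (x : {ffun 'I_3 -> 'F_p}) : bool :=
  \sum_(k < 3) x k ^+ 2 + \sum_(k < 3) a k * x (prv k) * x (nxt k)
  == sval3 * x ord0 * x (inord 1) * x (inord 2).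

Definition solset (i : 'I_3) : {set {ffun 'I_3 -> 'F_p}} :=
  [set y | is_sol y & (y != 0) && (y i == 0)].

Definition mv (k : 'I_3) (y : {ffun 'I_3 -> 'F_p}) : {ffun 'I_3 -> 'F_p} :=
  [ffun j => if j == k then
      - y k + sval3 * y (prv k) * y (nxt k) - a (nxt k) * y (prv k)
      - a (prv k) * y (nxt k)
    else y j].

Definition rho (i : 'I_3) (y : {ffun 'I_3 -> 'F_p}) := mv (nxt i) (mv (prv i) y).

Definition is_rho_order (i : 'I_3) (N : nat) : Prop :=
  (0 < N)%N /\
  (forall y, y \in solset i -> iter N (rho i) y = y) /\
  (forall n, (0 < n < N)%N -> exists2 y, y \in solset i & iter n (rho i) y != y).

Definition Delta (i : 'I_3) (y : {ffun 'I_3 -> 'F_p}) : 'F_p :=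
  (a (prv i) / y (prv i) + a (nxt i) / y (nxt i)) / 2%:R.

Definition DeltaSum (i : 'I_3) (N : nat) (x : {ffun 'I_3 -> 'F_p}) : 'F_p :=
  \sum_(l < N) (Delta i (mv (prv i) (iter l (rho i) x)) + Delta i (iter l (rho i) x)).

End Markoff.

(* Main.v *)
Require Import Defs.
From mathcomp Require Import all_boot all_algebra.
From mathcomp Require Import ring.
Import GRing.Theory.
Local Open Scope ring_scope.

Lemma idx_ne (i : 'I_3) :
  [/\ prv i != i, nxt i != i & prv i != nxt i].
Proof.
by case: i => [[|[|[|]]] Hi] //=; split; rewrite //= -val_eqE /= /prv /nxt /= ?inordK.
Qed.

Lemma idx_eq (i : 'I_3) :
  [/\ prv (prv i) = nxt i, nxt (prv i) = i, prv (nxt i) = i & nxt (nxt i) = prv i].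
Proof.
by case: i => [[|[|[|]]] Hi] //=; split; apply/val_inj; rewrite //= /prv /nxt /= ?inordK.
Qed.

Lemma idx_cases (i j : 'I_3) : j = i \/ j = prv i \/ j = nxt i.
Proof.
have: [|| j == i, j == prv i | j == nxt i].
  by case: i => [[|[|[|]]] Hi] //=; case: j => [[|[|[|]]] Hj] //=;
  rewrite -!val_eqE /= /prv /nxt /= ?inordK.
by case/or3P=> /eqP; auto.
Qed.
Lemma sum3 (R : nmodType) (f : 'I_3 -> R) (i : 'I_3) :
  \sum_(k < 3) f k = f i + f (prv i) + f (nxt i).
Proof.
rewrite !big_ord_recr big_ord0 /= add0r.
pose g := fun n : nat => f (inord n).
have F o : f o = g o by rewrite /g inord_val.
case: i => [[|[|[|]]] Hi] //=; rewrite /prv /nxt /= !F /= ?inordK //.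
- by change (g 0%N + g 1%N + g 2%N = g 0%N + g 2%N + g 1%N); rewrite addrAC.
- by change (g 0%N + g 1%N + g 2%N = g 1%N + g 0%N + g 2%N); rewrite [g 1%N + _]addrC.
- by change (g 0%N + g 1%N + g 2%N = g 2%N + g 1%N + g 0%N); rewrite addrC [g 0%N + _]addrC addrA.
Qed.
Lemma prod3 (R : comPzRingType) (f : 'I_3 -> R) (i : 'I_3) :
  f ord0 * (f (inord 1) * f (inord 2)) = f i * (f (prv i) * f (nxt i)).
Proof.
pose g := fun n : nat => f (inord n).
have F o : f o = g o by rewrite /g inord_val.
case: i => [[|[|[|]]] Hi] //=; rewrite /prv /nxt /= !F /= ?inordK //.
- by change (g 0%N * (g 1%N * g 2%N) = g 0%N * (g 2%N * g 1%N)); ring.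
- by change (g 0%N * (g 1%N * g 2%N) = g 1%N * (g 0%N * g 2%N)); ring.
- by change (g 0%N * (g 1%N * g 2%N) = g 2%N * (g 1%N * g 0%N)); ring.
Qed.

Section Main.
Variables (p : nat) (a : 'I_3 -> 'F_p) (i : 'I_3).
Local Notation P := (prv i).
Local Notation Q := (nxt i).
Local Notation A := (a i).

Lemma sol_char (y : {ffun 'I_3 -> 'F_p}) : y \in solset a i ->
  [/\ y i = 0, y P != 0, y Q != 0 & y P ^+ 2 + A * y P * y Q + y Q ^+ 2 = 0].
Proof.
rewrite inE => /andP [Hs /andP[Hnz /eqP Hi]].
have [e1 e2 e3 e4] := idx_eq i.
rewrite /is_sol -!mulrA (prod3 _ _ i) (sum3 _ _ i) (sum3 _ _ i) e1 e2 e3 e4 Hi -subr_eq0 in Hs.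
move/eqP: Hs => Hs.
have E : y P ^+ 2 + A * y P * y Q + y Q ^+ 2 = 0 by rewrite -Hs; ring.
have Hz : y P = 0 -> y Q = 0 -> False.
  move=> h1 h2; move/eqP: Hnz; apply; apply/ffunP => j; rewrite ffunE.
  by case: (idx_cases i j) => [->|[->|->]].
split => //.
- apply/eqP => h; apply: Hz => //; move: E; rewrite h; rewrite expr0n /= mulr0 mul0r !add0r.
  by move/eqP; rewrite expf_eq0 /= => /eqP.
- apply/eqP => h; apply: Hz => //; move: E; rewrite h; rewrite expr0n /= mulr0 !addr0.
  by move/eqP; rewrite expf_eq0 /= => /eqP.
Qed.

Lemma mvP_co (y : {ffun 'I_3 -> 'F_p}) : y i = 0 ->
  [/\ mv a P y i = 0, mv a P y P = - y P - A * y Q & mv a P y Q = y Q].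
Proof.
move=> Hi; have [n1 n2 n3] := idx_ne i; have [e1 e2 e3 e4] := idx_eq i.
rewrite /mv !ffunE eqxx eq_sym (negbTE n1) eq_sym (negbTE n3) e1 e2 Hi; split => //; ring.
Qed.

Lemma mvQ_co (y : {ffun 'I_3 -> 'F_p}) : y i = 0 ->
  [/\ mv a Q y i = 0, mv a Q y P = y P & mv a Q y Q = - y Q - A * y P].
Proof.
move=> Hi; have [n1 n2 n3] := idx_ne i; have [e1 e2 e3 e4] := idx_eq i.
rewrite /mv !ffunE eqxx eq_sym (negbTE n2) (negbTE n3) e3 e4 Hi; split => //; ring.
Qed.

Lemma rho_iter (x : {ffun 'I_3 -> 'F_p}) : x \in solset a i ->
  forall l, [/\ iter l (rho a i) x i = 0,
     iter l (rho a i) x P = ((x Q / x P) ^+ 2) ^+ l * x P &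
     iter l (rho a i) x Q = ((x Q / x P) ^+ 2) ^+ l * x Q].
Proof.
case/sol_char => Hi hu hv E.
set u := x P in hu E *; set v := x Q in hv E *.
set w := (v / u) ^+ 2.
have k1 : - u - A * v = w * u.
  apply/eqP; rewrite -subr_eq0; apply/eqP.
  have -> : - u - A * v - w * u = (- u^-1) * (u ^+ 2 + A * u * v + v ^+ 2) by rewrite /w; field.
  by rewrite E mulr0.
have k2 : - v - A * (w * u) = w * v.
  apply/eqP; rewrite -subr_eq0; apply/eqP.
  have -> : - v - A * (w * u) - w * v = (- v / u ^+ 2) * (u ^+ 2 + A * u * v + v ^+ 2).
    by rewrite /w; field.
  by rewrite E mulr0.
elim=> [|l [h0 h1 h2]]; first by rewrite /= !expr0 !mul1r.
rewrite iterS /rho.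
have [m0 m1 m2] := mvP_co _ h0.
have [q0 q1 q2] := mvQ_co _ m0.
rewrite q0 q1 q2 m1 m2 h1 h2; split => //.
- have -> : - (w ^+ l * u) - A * (w ^+ l * v) = w ^+ l * (- u - A * v) by ring.
  by rewrite k1 exprS; ring.
- have -> : - (w ^+ l * u) - A * (w ^+ l * v) = w ^+ l * (w * u) by rewrite -k1; ring.
  have -> : - (w ^+ l * v) - A * (w ^+ l * (w * u)) = w ^+ l * (- v - A * (w * u)) by ring.
  by rewrite k2 exprS; ring.
Qed.

Lemma term_eq (x : {ffun 'I_3 -> 'F_p}) (two : (2%:R : 'F_p) != 0) :
  x \in solset a i -> forall l,
  Delta a i (mv a P (iter l (rho a i) x)) + Delta a i (iter l (rho a i) x)
  = ((x P / x Q) ^+ 2) ^+ l * ((2%:R * a Q - A * a P) / (2%:R * x Q)).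
Proof.
move=> Hx l; have [h0 h1 h2] := rho_iter _ Hx l.
have [m0 m1 m2] := mvP_co _ h0.
case/sol_char: Hx => Hi hu hv E.
rewrite /Delta m1 m2 h1 h2.
set u := x P in hu E *; set v := x Q in hv E *.
set w := (v / u) ^+ 2; set z := (u / v) ^+ 2.
have k1 : - u - A * v = w * u.
  apply/eqP; rewrite -subr_eq0; apply/eqP.
  have -> : - u - A * v - w * u = (- u^-1) * (u ^+ 2 + A * u * v + v ^+ 2) by rewrite /w; field.
  by rewrite E mulr0.
have -> : - (w ^+ l * u) - A * (w ^+ l * v) = w ^+ l * (w * u) by rewrite -k1; ring.
have -> : w ^+ l = (z ^+ l)^-1 by rewrite -exprVn /w /z -exprVn invf_div.
have zn : z ^+ l != 0 by rewrite expf_neq0 // /z expf_neq0 // mulf_neq0 // invr_eq0.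
set T := z ^+ l in zn *.
apply/eqP; rewrite -subr_eq0; apply/eqP.
rewrite [LHS](_ : _ = T * a P / (2%:R * u * v ^+ 2) * (u ^+ 2 + A * u * v + v ^+ 2)).
  by rewrite E mulr0.
rewrite /w; field.
by rewrite hu hv two zn.
Qed.

Lemma sq1 (y : {ffun 'I_3 -> 'F_p}) (two : (2%:R : 'F_p) != 0) :
  y \in solset a i -> A ^+ 2 = 4%:R -> (y P / y Q) ^+ 2 = 1.
Proof.
case/sol_char => Hi hu hv E HA.
have hA2 : (A / 2%:R) ^+ 2 = 1.
  rewrite expr_div_n HA; apply/eqP; rewrite -subr_eq0; apply/eqP; field.
  by rewrite (_ : 4%:R = 2%:R * 2%:R :> 'F_p) ?mulf_neq0 // -natrM.
have h : (y P + A / 2%:R * y Q) ^+ 2 = 0.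
  rewrite [LHS](_ : _ = (y P ^+ 2 + A * y P * y Q + y Q ^+ 2) + ((A / 2%:R) ^+ 2 - 1) * y Q ^+ 2).
    by rewrite E hA2 subrr mul0r addr0.
  by field.
move/eqP: h; rewrite sqrf_eq0 addr_eq0 => /eqP ->.
by rewrite -mulNr mulfK // sqrrN hA2.
Qed.

End Main.

Theorem proposition2p3 (p : nat) (a : 'I_3 -> 'F_p) (i : 'I_3)
    (x : {ffun 'I_3 -> 'F_p}) (N : nat) :
  prime p -> odd p ->
  x \in solset a i ->
  is_rho_order a i N ->
  (a i ^+ 2 != 4%:R -> DeltaSum a i N x = 0) /\
  (a i ^+ 2 = 4%:R ->
     (DeltaSum a i N x = 0 <-> 2%:R * a (prv i) = a (nxt i) * a i)).
Proof.
move=> pr podd Hx [N0 [Hper Hmin]].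
have two : (2%:R : 'F_p) != 0.
  rewrite -(dvdn_pcharf (pchar_Fp pr)); apply/negP => /(dvdn_leq (isT : (0 < 2)%N)) hle.
  have h2 : p = 2%N by apply/eqP; rewrite eqn_leq hle prime_gt1.
  by rewrite h2 in podd.
have [Hi hu hv E] := sol_char _ _ _ _ Hx.
set u := x (prv i) in hu E *; set v := x (nxt i) in hv E *.
set K := (2%:R * a (nxt i) - a i * a (prv i)) / (2%:R * v).
set z := (u / v) ^+ 2.
have DS : DeltaSum a i N x = (\sum_(l < N) z ^+ l) * K.
  by rewrite /DeltaSum big_distrl; apply: eq_bigr => l _; exact: term_eq.
have zN : z ^+ N = 1.
  have [_ h1 _] := rho_iter _ _ _ _ Hx N; rewrite Hper // in h1.
  have : ((v / u) ^+ 2 ^+ N - 1) * u = 0 by rewrite mulrBl -h1 mul1r subrr.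
  move/eqP; rewrite mulf_eq0 (negbTE hu) orbF subr_eq0 => /eqP wN.
  by rewrite /z -invf_div exprVn exprVn wN invr1.
split.
- move=> HA.
  have z1 : z != 1.
    apply/eqP => z1; move/negP: HA; apply; apply/eqP.
    have uv : u ^+ 2 = v ^+ 2.
      by move: z1; rewrite /z expr_div_n => h; rewrite -[v ^+ 2]mul1r -h divfK // expf_neq0.
    have : (u - v) * (u + v) = 0 by rewrite -subr_sqr uv subrr.
    move/eqP; rewrite mulf_eq0 subr_eq0 addr_eq0 => /orP [] /eqP huv.
    + have : (2%:R + a i) * u ^+ 2 = 0 by rewrite -E -huv; ring.
      move/eqP; rewrite mulf_eq0 expf_eq0 (negbTE hu) andbF orbF addrC addr_eq0 => /eqP ->.
      by rewrite sqrrN; ring.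
    + have : (2%:R - a i) * u ^+ 2 = 0.
        by rewrite -E huv; ring.
      move/eqP; rewrite mulf_eq0 expf_eq0 (negbTE hu) andbF orbF subr_eq0 => /eqP <-.
      by ring.
  have : (z - 1) * \sum_(l < N) z ^+ l = 0 by rewrite -subrX1 zN subrr.
  move/eqP; rewrite mulf_eq0 subr_eq0 (negbTE z1) /= => /eqP S0.
  by rewrite DS S0 mul0r.
- move=> HA.
  have N1 : N = 1%N.
    case: N N0 Hper Hmin {DS zN} => [|[|n]] // _ _ Hmin.
    have [y Hy] := Hmin 1%N isT.
    have [_ h1 h2] := rho_iter _ _ _ _ Hy 1.
    have w1 : (y (nxt i) / y (prv i)) ^+ 2 = 1.
      by rewrite -invf_div exprVn (sq1 _ _ _ _ two Hy HA) invr1.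
    case/negP; apply/eqP/ffunP => j.
    case: (idx_cases i j) => [->|[->|->]].
    + by have [-> _ _ _] := sol_char _ _ _ _ Hy; have [-> _ _] := rho_iter _ _ _ _ Hy 1.
    + by rewrite h1 w1 expr1 mul1r.
    + by rewrite h2 w1 expr1 mul1r.
  rewrite DS N1 big_ord1 expr0 mul1r /K.
  have hden : 2%:R * v != 0 by rewrite mulf_neq0.
  split.
  + move=> h.
    have h' : 2%:R * a (nxt i) - a i * a (prv i) = 0.
      by move/eqP: h; rewrite mulf_eq0 invr_eq0 (negbTE hden) orbF => /eqP.
    have : 2%:R * (2%:R * a (prv i) - a (nxt i) * a i) = 0.
      rewrite (_ : _ * _ = (4%:R - a i ^+ 2) * a (prv i)
                      - a i * (2%:R * a (nxt i) - a i * a (prv i))); last by ring.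
      by rewrite HA h' subrr mul0r mulr0 subr0.
    by move/eqP; rewrite mulf_eq0 (negbTE two) /= subr_eq0 => /eqP.
  + move=> h.
    have : 2%:R * (2%:R * a (nxt i) - a i * a (prv i)) = 0.
      rewrite (_ : _ * _ = (4%:R - a i ^+ 2) * a (nxt i)
                      - a i * (2%:R * a (prv i) - a (nxt i) * a i)); last by ring.
      by rewrite HA h !subrr mul0r mulr0 subr0.
    by move/eqP; rewrite mulf_eq0 (negbTE two) /= => /eqP ->; rewrite mul0r.
Qed.
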